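(* Let $p\in\mathcal C^2(\mathbb R)$ with $0<a\le p(t)\le b$ for all $t$ and $\dot p,\ddot p$ bounded. Suppose there are $\tilde t_1<\tilde t_2$ such that $\dot p$ attains its maximum $\sup_{t\in\mathbb R}\dot p(t)$ at both $\tilde t_1$ and $\tilde t_2$, and $p(\tilde t_1)>p(\tilde t_2)$. Then the ping-pong map $(t_0,v_0)\mapsto(t_1,v_1)$ on $\mathbb R\times(v_*,\infty)$ is not injective: there exist two distinct points with the same image.
   Context: Ping-pong map for the forcing $p$: let $v_*=2\max\{\sup_t\dot p(t),0\}$. For $(t_0,v_0)\in\mathbb R\times(v_*,\infty)$, let $\tilde t$ be the unique solution of $(\tilde t-t_0)v_0=p(\tilde t)$, and set $v_1=v_0-2\dot p(\tilde t)$, $t_1=\tilde t+p(\tilde t)/v_1$. *)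

(* Defs.v *)
From Stdlib Require Import Reals Lra.
Open Scope R_scope.

(* v_* = 2 max{ sup_t dp(t), 0 }, with dp the derivative of p;
   [above_vstar dp v0] means v0 > v_*. *)
Definition above_vstar (dp : R -> R) (v0 : R) : Prop :=
  exists s, is_lub (fun y => exists t, y = dp t) s /\ 2 * Rmax s 0 < v0.

Definition pingpong (p dp : R -> R) (t0 v0 t1 v1 : R) : Prop :=
  exists tt,
    (tt - t0) * v0 = p tt /\
    (forall s, (s - t0) * v0 = p s -> s = tt) /\
    v1 = v0 - 2 * dp tt /\
    t1 = tt + p tt / v1.

(* Main.v *)
Require Import Defs.
From Stdlib Require Import Reals Lra.
Open Scope R_scope.

Lemma uniq_root (p dp : R -> R) (m t0 v0 tt : R)
  (Hdp : forall t, derivable_pt_lim p t (dp t))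
  (Hm : forall t, dp t <= m) (Hv : m < v0)
  (H1 : (tt - t0) * v0 = p tt) :
  forall s, (s - t0) * v0 = p s -> s = tt.
Proof.
  intros s Hs.
  destruct (Rtotal_order s tt) as [Hl|[He|Hg]]; auto.
  - destruct (MVT_cor2 p dp s tt Hl (fun c _ => Hdp c)) as [c [Hc _]].
    assert (E : (tt - s) * (v0 - dp c) = 0) by nra.
    specialize (Hm c). nra.
  - destruct (MVT_cor2 p dp tt s Hg (fun c _ => Hdp c)) as [c [Hc _]].
    assert (E : (s - tt) * (v0 - dp c) = 0) by nra.
    specialize (Hm c). nra.
Qed.

Theorem mainTheorem8 (p dp ddp : R -> R) (a b tt1 tt2 : R)
  (Hdp : forall t, derivable_pt_lim p t (dp t))
  (Hddp : forall t, derivable_pt_lim dp t (ddp t))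
  (Hcont : continuity ddp)
  (Ha : 0 < a)
  (Hbounds : forall t, a <= p t <= b)
  (Hdpb : exists M, forall t, Rabs (dp t) <= M)
  (Hddpb : exists M, forall t, Rabs (ddp t) <= M)
  (Hlt : tt1 < tt2)
  (Hmax1 : is_lub (fun y => exists t, y = dp t) (dp tt1))
  (Hmax2 : is_lub (fun y => exists t, y = dp t) (dp tt2))
  (Hp : p tt1 > p tt2) :
  exists t0 v0 t0' v0' t1 v1,
    above_vstar dp v0 /\ above_vstar dp v0' /\
    (t0, v0) <> (t0', v0') /\
    pingpong p dp t0 v0 t1 v1 /\ pingpong p dp t0' v0' t1 v1.
Proof.
  set (m := dp tt1).
  assert (E12 : dp tt2 = m) by (symmetry; exact (is_lub_u _ _ _ Hmax1 Hmax2)).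
  assert (Hm : forall t, dp t <= m).
  { intro t. apply (proj1 Hmax1). exists t; reflexivity. }
  assert (Hm0 : 0 <= m).
  { destruct (Rle_or_lt 0 m) as [h|h]; auto.
    set (T := (b - a) / (- m) + 1).
    assert (HT : 0 < T).
    { unfold T. assert (0 <= (b - a) / (- m)).
      { unfold Rdiv; apply Rmult_le_pos; [pose proof (Hbounds 0); lra| left; apply Rinv_0_lt_compat; lra]. }
      lra. }
    destruct (MVT_cor2 p dp 0 T HT (fun c _ => Hdp c)) as [c [Hc _]].
    pose proof (Hm c). pose proof (Hbounds 0). pose proof (Hbounds T).
    assert (mT : m * T = - (b - a) + m) by (unfold T; field; lra).
    nra. }
  set (v1 := (p tt1 - p tt2) / (tt2 - tt1)).
  assert (Hv1 : 0 < v1) by (apply Rdiv_lt_0_compat; lra).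
  set (v0 := v1 + 2 * m).
  assert (Hv0 : 0 < v0) by (unfold v0; lra).
  assert (Hav : above_vstar dp v0).
  { exists m. split; [exact Hmax1|]. rewrite Rmax_left by lra. unfold v0; lra. }
  exists (tt1 - p tt1 / v0), v0, (tt2 - p tt2 / v0), v0,
    (tt1 + p tt1 / v1), v1.
  split; [exact Hav|]. split; [exact Hav|]. split.
  { intro Heq. injection Heq as Heq.
    assert (E : (tt1 - p tt1 / v0) * v0 = (tt2 - p tt2 / v0) * v0) by (rewrite Heq; reflexivity).
    replace ((tt1 - p tt1 / v0) * v0) with (tt1 * v0 - p tt1) in E by (field; lra).
    replace ((tt2 - p tt2 / v0) * v0) with (tt2 * v0 - p tt2) in E by (field; lra).
    nra. }
  split.
  - exists tt1. assert (H1 : (tt1 - (tt1 - p tt1 / v0)) * v0 = p tt1) by (field; lra).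
    split; [exact H1|]. split.
    + apply (uniq_root p dp m _ _ _ Hdp Hm); [unfold v0; lra | exact H1].
    + split; [unfold v0, m; ring | reflexivity].
  - exists tt2. assert (H1 : (tt2 - (tt2 - p tt2 / v0)) * v0 = p tt2) by (field; lra).
    split; [exact H1|]. split.
    + apply (uniq_root p dp m _ _ _ Hdp Hm); [unfold v0; lra | exact H1].
    + split; [rewrite E12; unfold v0; ring|].
      unfold v1. field. lra.
Qed.
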